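(* Let $p(0,N):=\frac{1}{2+a\varphi_N}$, $k(N):=\lfloor N/\sqrt{\log N}\rfloor$, and for $w\in\mathbb W$ let $S(w):=\max_{0\le n\le\tau_0(w)}w(n)$. Then, in $\mathbb P^{p(0,N)}_{k(N)}$-probability as $N\to\infty$, $$\max_{0\le n<\sigma_{S(W)}(W)}\big(\log_N S(W)-\log_N W(n)\big)\to0$$ and $$\max_{S(W)\ge k>0}\ \max_{\sigma_k(W)\le n<\sigma_{k-1}(W)}\big(\log_N k-\log_N W(n)\big)\to0.$$
   Context: $a>0$ and $0<\varphi_N\le1$. Let $\mathbb W$ be the set of integer sequences $w=(w(0),w(1),\dots)$ with $w(n+1)-w(n)\in\{-1,1\}$. For $p\in(0,1)$ and $k\in\mathbb Z$, $\mathbb P_k^p$ is the law on $\mathbb W$ of the simple random walk $W$ with $W(0)=k$ stepping $+1$ with probability $p$ and $-1$ with probability $1-p$. For $k\in\mathbb N_0$, $\tau_k(w):=\min\{n\in\mathbb N_0: w(n)=k\}$, and $\sigma_k(w):=\max\{n\in\mathbb N_0: w(n)=k,\ w(j)\ge1\text{ for all }j\in\{0,\dots,n-1\}\}$ is the time of the last visit of $k$ before $w$ hits $0$ (so $\sigma_0=\tau_0$). $\log_N x=\log x/\log N$. *)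

(* Defs.v *)
From Stdlib Require Import Reals Lra Lia ZArith List Classical ClassicalEpsilon.
From Coquelicot Require Import Coquelicot.
Import ListNotations.
Open Scope R_scope.

(** Step sequences: [true] = step +1, [false] = step -1. *)

Fixpoint allpaths (n : nat) : list (list bool) :=
  match n with
  | O => [nil]
  | S m => map (cons true) (allpaths m) ++ map (cons false) (allpaths m)
  end.

Fixpoint weight (p : R) (l : list bool) : R :=
  match l with
  | nil => 1
  | b :: l' => (if b then p else 1 - p) * weight p l'
  end.

Definition prob_n (p : R) (n : nat) (E : list bool -> Prop) : R :=
  fold_right Rplus 0
    (map (fun l => if excluded_middle_informative (E l) then weight p l else 0)
         (allpaths n)).

Definition step (b : bool) : Z := if b then 1%Z else (-1)%Z.
Definition walk (k : nat) (l : list bool) (m : nat) : Z :=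
  (Z.of_nat k + fold_right Z.add 0 (map step (firstn m l)))%Z.

Definition is_tau0 (w : nat -> Z) (T : nat) : Prop :=
  w T = 0%Z /\ forall j, (j < T)%nat -> w j <> 0%Z.

Definition is_sigma (w : nat -> Z) (j : Z) (s : nat) : Prop :=
  w s = j /\ (forall i, (i < s)%nat -> (1 <= w i)%Z) /\
  forall m, w m = j -> (forall i, (i < m)%nat -> (1 <= w i)%Z) -> (m <= s)%nat.

Definition is_max_upto (w : nat -> Z) (T : nat) (M : Z) : Prop :=
  (exists m, (m <= T)%nat /\ w m = M) /\ forall m, (m <= T)%nat -> (w m <= M)%Z.

Definition logN (N : nat) (x : R) : R := ln x / ln (INR N).

(** The "good" event at tolerance eps for the path w, given that tau_0 = T:
    both maxima of the statement are <= eps. (Both maxima are over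
    nonnegative terms, so this is |max| <= eps; an empty max imposes nothing.) *)
Definition good_event (N : nat) (eps : R) (w : nat -> Z) (T : nat) : Prop :=
  forall Smax : Z, is_max_upto w T Smax ->
    (forall s, is_sigma w Smax s ->
       forall n, (n < s)%nat -> logN N (IZR Smax) - logN N (IZR (w n)) <= eps) /\
    (forall k : Z, (0 < k <= Smax)%Z ->
       forall s1 s2, is_sigma w k s1 -> is_sigma w (k - 1) s2 ->
       forall n, (s1 <= n < s2)%nat -> logN N (IZR k) - logN N (IZR (w n)) <= eps).

(** P^p_k (tau_0 < oo and E), for an event E determined by the path stopped at
    tau_0: the increasing limit over horizons n of the probability that
    tau_0 <= n and E holds. *)
Definition prob_stopped (p : R) (k : nat)
    (E : (nat -> Z) -> nat -> Prop) : R :=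
  real (Lim_seq (fun n => prob_n p n (fun l =>
     exists T, (T <= n)%nat /\ is_tau0 (walk k l) T /\ E (walk k l) T))).

Definition p0N (a : R) (phi : nat -> R) (N : nat) : R := 1 / (2 + a * phi N).
Definition kN (N : nat) : nat :=
  Z.to_nat (Int_part (INR N / sqrt (ln (INR N)))).

(* Main.v *)
Require Import Defs.
From Stdlib Require Import Reals ZArith.
From Coquelicot Require Import Coquelicot.
From Stdlib Require Import Lra Lia List Classical ClassicalEpsilon.
Import ListNotations.
Open Scope R_scope.

Definition sumR (L : list R) : R := fold_right Rplus 0 L.

Lemma sumR_app : forall l1 l2, sumR (l1 ++ l2) = sumR l1 + sumR l2.
Proof. induction l1; intros; simpl; [lra|]. unfold sumR in *; simpl; rewrite IHl1; lra. Qed.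

Lemma sum_scal {A} (c : R) (f : A -> R) (L : list A) :
  sumR (map (fun x => c * f x) L) = c * sumR (map f L).
Proof. induction L; unfold sumR in *; simpl; [lra|]. rewrite IHL; lra. Qed.

Lemma sum_le {A} (f g : A -> R) (L : list A) :
  (forall x, In x L -> f x <= g x) -> sumR (map f L) <= sumR (map g L).
Proof.
  induction L; intros H; unfold sumR in *; simpl; [lra|].
  apply Rplus_le_compat; [apply H; simpl; auto| apply IHL; intros; apply H; simpl; auto].
Qed.

Lemma sum_plus {A} (f g : A -> R) (L : list A) :
  sumR (map (fun x => f x + g x) L) = sumR (map f L) + sumR (map g L).
Proof. induction L; unfold sumR in *; simpl; [lra|]. rewrite IHL; lra. Qed.

Lemma sum_nonneg {A} (f : A -> R) (L : list A) :
  (forall x, In x L -> 0 <= f x) -> 0 <= sumR (map f L).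
Proof.
  intros H. replace 0 with (sumR (map (fun _ : A => 0) L)).
  - apply sum_le; auto.
  - induction L; unfold sumR in *; simpl; auto. rewrite IHL; [lra|]. intros; apply H; simpl; auto.
Qed.

Definition ind (p : R) (E : list bool -> Prop) (l : list bool) : R :=
  if excluded_middle_informative (E l) then weight p l else 0.

Lemma prob_n_eq p n E : prob_n p n E = sumR (map (ind p E) (allpaths n)).
Proof. reflexivity. Qed.

Lemma allpaths_len n l : In l (allpaths n) -> length l = n.
Proof.
  revert l; induction n; simpl; intros l H.
  - destruct H as [<-|[]]; auto.
  - apply in_app_or in H; destruct H as [H|H]; apply in_map_iff in H;
    destruct H as [l' [<- H]]; simpl; f_equal; auto.
Qed.

Section P.
Variable p : R.
Hypothesis hp : 0 <= p <= 1.

Lemma weight_nonneg l : 0 <= weight p l.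
Proof. induction l; simpl; [lra|]. destruct a; apply Rmult_le_pos; lra. Qed.

Lemma ind_nonneg E l : 0 <= ind p E l.
Proof. unfold ind; destruct excluded_middle_informative; [apply weight_nonneg|lra]. Qed.

Lemma prob_nonneg n E : 0 <= prob_n p n E.
Proof. rewrite prob_n_eq. apply sum_nonneg; intros; apply ind_nonneg. Qed.

Lemma prob_S n E : prob_n p (S n) E =
  p * prob_n p n (fun l => E (true :: l)) + (1 - p) * prob_n p n (fun l => E (false :: l)).
Proof.
  rewrite !prob_n_eq. simpl. rewrite map_app, sumR_app, !map_map, <- !sum_scal.
  f_equal; f_equal; apply map_ext; intros l; unfold ind; simpl;
  destruct excluded_middle_informative; lra.
Qed.

Lemma prob_mono n E E' : (forall l, length l = n -> E l -> E' l) ->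
  prob_n p n E <= prob_n p n E'.
Proof.
  intros H; rewrite !prob_n_eq; apply sum_le; intros l Hl; unfold ind.
  apply allpaths_len in Hl.
  destruct (excluded_middle_informative (E l)), (excluded_middle_informative (E' l));
   try lra; try apply weight_nonneg. exfalso; auto.
Qed.

Lemma prob_true n : prob_n p n (fun _ => True) = 1.
Proof.
  induction n; [unfold prob_n; simpl; destruct excluded_middle_informative; simpl; [lra|tauto]|].
  rewrite prob_S, IHn; lra.
Qed.

Lemma prob_cover n E E1 E2 E3 :
  (forall l, length l = n -> E l \/ E1 l \/ E2 l \/ E3 l) ->
  1 <= prob_n p n E1 + prob_n p n E2 + prob_n p n E3 + prob_n p n E.
Proof.
  intros H. rewrite <- (prob_true n). rewrite !prob_n_eq, <- !sum_plus.
  apply sum_le; intros l Hl; apply allpaths_len in Hl. specialize (H l Hl).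
  pose proof (ind_nonneg E l); pose proof (ind_nonneg E1 l);
  pose proof (ind_nonneg E2 l); pose proof (ind_nonneg E3 l).
  unfold ind at 1; destruct excluded_middle_informative as [_|h]; [|exfalso; auto].
  unfold ind in *; destruct H as [h|[h|[h|h]]];
  [destruct (excluded_middle_informative (E l))|destruct (excluded_middle_informative (E1 l))
  |destruct (excluded_middle_informative (E2 l))|destruct (excluded_middle_informative (E3 l))];
  try tauto; lra.
Qed.

Lemma prob_le1 n E : prob_n p n E <= 1.
Proof. rewrite <- (prob_true n). apply prob_mono; auto. Qed.

Lemma prob_false n E : (forall l, ~ E l) -> prob_n p n E = 0.
Proof.
  intros H; rewrite prob_n_eq. induction (allpaths n); unfold sumR in *; simpl; auto.
  rewrite IHl; unfold ind; destruct excluded_middle_informative as [h|h]; [exfalso; eapply H; exact h| lra].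
Qed.

End P.

Open Scope Z_scope.
Definition wZ (z : Z) (l : list bool) (m : nat) : Z :=
  z + fold_right Z.add 0 (map step (firstn m l)).

Lemma walk_wZ k l : walk k l = wZ (Z.of_nat k) l.
Proof. reflexivity. Qed.

Lemma wZ_0 z l : wZ z l 0 = z.
Proof. unfold wZ; simpl; lia. Qed.

Lemma wZ_S z b l m : wZ z (b :: l) (S m) = wZ (z + step b) l m.
Proof. unfold wZ; simpl; lia. Qed.

Lemma wZ_diff : forall l z j, -1 <= wZ z l (S j) - wZ z l j <= 1.
Proof.
  induction l; intros z j.
  - unfold wZ; simpl. destruct j; simpl; lia.
  - destruct j.
    + rewrite wZ_S, wZ_0, wZ_0. destruct a; simpl; lia.
    + rewrite !wZ_S. apply IHl.
Qed.

Lemma first_zero (w : nat -> Z) (hw : forall j, -1 <= w (S j) - w j <= 1) (h0 : 1 <= w 0%nat) :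
  forall n, (exists j, (j <= n)%nat /\ w j < 1) ->
  exists T, (T <= n)%nat /\ w T = 0 /\ forall j, (j < T)%nat -> 1 <= w j.
Proof.
  induction n; intros [j [Hj Hw]].
  - assert (j = 0%nat) by lia; subst; lia.
  - destruct (classic (exists j, (j <= n)%nat /\ w j < 1)) as [H|H].
    + destruct (IHn H) as [T [? ?]]. exists T; split; [lia|auto].
    + assert (Hall : forall i, (i <= n)%nat -> 1 <= w i).
      { intros i Hi. destruct (Z_lt_le_dec (w i) 1); auto. exfalso; apply H; eauto. }
      assert (j = S n) by (destruct (Nat.eq_dec j (S n)); auto; exfalso; apply H; exists j; split; [lia|auto]).
      subst. exists (S n); split; [lia|]. split.
      * specialize (hw n); specialize (Hall n (le_n _)); lia.
      * intros i Hi; apply Hall; lia.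
Qed.

Fixpoint alive (z : Z) (l : list bool) : Prop :=
  1 <= z /\ match l with nil => True | b :: l' => alive (z + step b) l' end.

Lemma not_alive : forall l z, ~ alive z l -> exists j, (j <= length l)%nat /\ wZ z l j < 1.
Proof.
  induction l; intros z H; simpl in H.
  - exists 0%nat; rewrite wZ_0; split; [lia|]. destruct (Z_lt_le_dec z 1); auto. tauto.
  - destruct (Z_lt_le_dec z 1).
    + exists 0%nat; rewrite wZ_0; split; [lia|auto].
    + destruct (IHl (z + step a)) as [j [? ?]]; [tauto|].
      exists (S j); rewrite wZ_S; simpl; split; [lia|auto].
Qed.

Fixpoint bad (c : R) (z mu : Z) (l : list bool) : Prop :=
  1 <= z /\ ((IZR z > c * IZR mu)%R \/
    match l with nil => False | b :: l' => bad c (z + step b) (Z.min mu (z + step b)) l' end).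

Lemma bad_link (c : R) (hc : (0 < c)%R) : forall l z mu, mu <= z ->
  (exists i m, (i <= m <= length l)%nat /\ (forall j, (j <= m)%nat -> 1 <= wZ z l j) /\
     ((IZR (wZ z l m) > c * IZR mu)%R \/ (IZR (wZ z l m) > c * IZR (wZ z l i))%R)) ->
  bad c z mu l.
Proof.
  induction l; intros z mu Hmu [i [m [Him [Hj Hb]]]].
  - simpl in Him. assert (m = 0%nat) by lia; assert (i = 0%nat) by lia; subst.
    rewrite wZ_0 in Hb. simpl. split; [specialize (Hj 0%nat (le_n _)); rewrite wZ_0 in Hj; lia|].
    left. destruct Hb; auto. apply IZR_le in Hmu. nra.
  - simpl. split; [specialize (Hj 0%nat (Nat.le_0_l _)); rewrite wZ_0 in Hj; lia|].
    destruct m.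
    + assert (i = 0%nat) by lia; subst. rewrite wZ_0 in Hb. left.
      destruct Hb; auto. apply IZR_le in Hmu. nra.
    + right. apply IHl; [lia|].
      destruct i.
      * exists 0%nat, m. split; [simpl in Him; lia|]. split.
        { intros j Hj'. rewrite <- wZ_S. apply Hj; lia. }
        left. rewrite wZ_0 in Hb. rewrite wZ_S in Hb.
        assert (Hm: (IZR (Z.min mu (z + step a)) <= IZR mu)%R) by (apply IZR_le; lia).
        apply IZR_le in Hmu. destruct Hb; nra.
      * exists i, m. split; [simpl in Him; lia|]. split.
        { intros j Hj'. rewrite <- wZ_S. apply Hj; lia. }
        rewrite !wZ_S in Hb.
        assert (Hm: (IZR (Z.min mu (z + step a)) <= IZR mu)%R) by (apply IZR_le; lia).
        destruct Hb; [left; nra|right; auto].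
Qed.
Close Scope Z_scope.

Lemma prob_alive (p s rho : R) (hp : 0 <= p <= 1) (hs : 1 <= s) (hr : 0 <= rho)
  (he : p * s * s + (1 - p) = rho * s) :
  forall n z, prob_n p n (alive z) <= rho ^ n * s ^ (Z.to_nat z).
Proof.
  assert (Hs0 : forall k, 0 <= s ^ k) by (intros; apply pow_le; lra).
  induction n; intros z.
  - unfold prob_n; simpl. destruct excluded_middle_informative; simpl.
    + pose proof (pow_R1_Rle s (Z.to_nat z) hs); lra.
    + rewrite Rplus_0_r; rewrite Rmult_1_l; auto.
  - rewrite prob_S by auto.
    destruct (Z_lt_le_dec z 1).
    + rewrite !prob_false by (intros ll; destruct ll; simpl; intros [hh _]; lia).
      pose proof (pow_le rho (S n) hr); pose proof (Hs0 (Z.to_nat z)); nra.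
    + assert (H1 : prob_n p n (fun l => alive z (true :: l)) <= prob_n p n (alive (z + 1)))
        by (apply prob_mono; auto; intros ll _ [_ hh]; exact hh).
      assert (H2 : prob_n p n (fun l => alive z (false :: l)) <= prob_n p n (alive (z - 1)))
        by (apply prob_mono; auto; intros ll _ [_ hh]; exact hh).
      pose proof (IHn (z+1)%Z). pose proof (IHn (z-1)%Z).
      assert (Hr : 0 <= rho ^ n) by (apply pow_le; lra).
      replace (Z.to_nat (z + 1)) with (S (Z.to_nat z)) in * by lia.
      destruct (Z.eq_dec z 1).
      * subst. rewrite (prob_false p n (alive (1-1))) in H2 by (intros ll; destruct ll; simpl; intros [hh _]; lia).
        simpl in *.
        pose proof (prob_nonneg p hp n (fun l0 : list bool => (1 <= 1)%Z /\ alive 0 l0)).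
        assert (p * prob_n p n (fun l0 : list bool => (1 <= 1)%Z /\ alive 2 l0) <= p * (rho ^ n * (s * (s * 1)))) by nra.
        assert (rho ^ n * (p * s * s) <= rho ^ n * (rho * s)) by nra.
        nra.
      * set (t := Z.to_nat (z-1)) in *.
        assert (Ez: Z.to_nat z = S t) by (unfold t; lia). rewrite Ez in H |- *. simpl in *.
        pose proof (Hs0 t).
        set (P1 := prob_n p n (fun l0 : list bool => (1 <= z)%Z /\ alive (z + 1) l0)) in *.
        set (P2 := prob_n p n (fun l0 : list bool => (1 <= z)%Z /\ alive (z + -1) l0)) in *.
        assert (p * P1 <= p * (rho ^ n * (s * (s * s ^ t)))) by (apply Rmult_le_compat_l; lra).
        assert ((1-p) * P2 <= (1-p) * (rho ^ n * s ^ t)) by (apply Rmult_le_compat_l; lra).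
        assert (rho * rho ^ n * (s * s ^ t) = rho^n * s^t * (p * s * s + (1 - p))) by (rewrite he; ring).
        nra.
Qed.

Definition Fb (c : R) (z mu : Z) : R := (IZR z / IZR mu + 1 + ln (IZR mu)) / c.

Lemma ln_gap x : 2 <= x -> 1 / x <= ln x - ln (x - 1).
Proof.
  intros hx. pose proof (exp_ineq1_le (- (1 / x))) as H.
  assert (H1 : 0 < 1 + - (1 / x)).
  { assert (1 / x <= 1 / 2) by (apply Rmult_le_compat_l; [lra| apply Rinv_le_contravar; lra]). lra. }
  apply ln_le in H; auto. rewrite ln_exp in H.
  replace (1 + - (1 / x)) with ((x - 1) * / x) in H by (field; lra).
  rewrite ln_mult in H by (try apply Rinv_0_lt_compat; lra).
  rewrite ln_Rinv in H by lra. lra.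
Qed.

Lemma ineq1 p c M X K : 0 < p <= 1/2 -> 0 < c -> 0 < M ->
  p * (((X + 1) / M + K) / c) + (1 - p) * (((X - 1) / M + K) / c) <= (X / M + K) / c.
Proof.
  intros hp hc hM.
  assert (E : p * (((X + 1) / M + K) / c) + (1 - p) * (((X - 1) / M + K) / c)
     = (X / M + K) / c + (2 * p - 1) * / (M * c)) by (field; lra).
  rewrite E. assert (0 < / (M * c)) by (apply Rinv_0_lt_compat; nra). nra.
Qed.

Lemma ineq3 p c x : 0 < p <= 1/2 -> 0 < c -> 2 <= x ->
  p * (((x + 1) / x + 1 + ln x) / c) + (1 - p) * (((x - 1) / (x - 1) + 1 + ln (x - 1)) / c)
  <= (x / x + 1 + ln x) / c.
Proof.
  intros hp hc hx. pose proof (ln_gap x hx) as D.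
  assert (E1 : p * (((x + 1) / x + 1 + ln x) / c) + (1 - p) * (((x - 1) / (x - 1) + 1 + ln (x - 1)) / c)
    = (2 + ln x - ((1 - p) * (ln x - ln (x - 1)) - p * (1 / x))) * / c) by (field; lra).
  assert (E2 : (x / x + 1 + ln x) / c = (2 + ln x) * / c) by (field; lra).
  rewrite E1, E2.
  assert (0 < / c) by (apply Rinv_0_lt_compat; lra).
  assert (0 < 1 / x) by (apply Rdiv_lt_0_compat; lra).
  assert (p * (1/x) <= p * (ln x - ln (x-1))) by (apply Rmult_le_compat_l; lra).
  assert (p * (ln x - ln (x-1)) <= (1 - p) * (ln x - ln (x-1))) by (apply Rmult_le_compat_r; lra).
  set (B := (1 - p) * (ln x - ln (x - 1)) - p * (1 / x)).
  assert (0 <= B) by (unfold B; lra).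
  assert (0 <= B * / c) by (apply Rmult_le_pos; lra).
  replace ((2 + ln x - B) * / c) with ((2 + ln x) * / c - B * / c) by ring. lra.
Qed.

Lemma prob_bad (p c : R) (hp : 0 < p <= 1/2) (hc : 0 < c) :
  forall n z mu, (1 <= mu <= z)%Z -> prob_n p n (bad c z mu) <= Fb c z mu.
Proof.
  assert (hp' : 0 <= p <= 1) by lra.
  assert (Fnn : forall z mu, (1 <= mu <= z)%Z -> 0 <= Fb c z mu).
  { intros z mu Hm. unfold Fb. apply Rdiv_le_0_compat; auto.
    assert (1 <= IZR mu) by (apply IZR_le; lia). assert (IZR mu <= IZR z) by (apply IZR_le; lia).
    pose proof (Rdiv_le_0_compat (IZR z) (IZR mu)). assert (0 <= ln (IZR mu)).
    { rewrite <- ln_1. apply ln_le; lra. } assert (0 <= IZR z / IZR mu) by (apply H1; lra). lra. }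
  assert (Fbig : forall z mu, (1 <= mu <= z)%Z -> IZR z > c * IZR mu -> 1 <= Fb c z mu).
  { intros z mu Hm Hz. unfold Fb.
    assert (1 <= IZR mu) by (apply IZR_le; lia).
    assert (0 <= ln (IZR mu)) by (rewrite <- ln_1; apply ln_le; lra).
    assert (c < IZR z / IZR mu) by (apply Rmult_lt_reg_r with (IZR mu); [lra|]; field_simplify; lra).
    assert (1 < (IZR z / IZR mu) / c) by (apply Rmult_lt_reg_r with c; [lra|]; field_simplify; lra).
    assert (0 <= (1 + ln (IZR mu)) / c) by (apply Rdiv_le_0_compat; lra).
    replace ((IZR z / IZR mu + 1 + ln (IZR mu)) / c) with ((IZR z / IZR mu) / c + (1 + ln (IZR mu)) / c) by (field; lra).
    lra. }
  induction n; intros z mu Hm.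
  - unfold prob_n; simpl. destruct excluded_middle_informative as [[h1 [h2|[]]]|h]; simpl.
    + rewrite Rplus_0_r. apply Fbig; auto.
    + rewrite Rplus_0_r. apply Fnn; auto.
  - destruct (Rlt_dec (c * IZR mu) (IZR z)) as [Hz|Hz].
    + pose proof (prob_le1 p hp' (S n) (bad c z mu)). pose proof (Fbig z mu Hm Hz). lra.
    + rewrite prob_S by auto.
      assert (H1 : prob_n p n (fun l => bad c z mu (true :: l)) <= prob_n p n (bad c (z + 1) mu)).
      { apply prob_mono; auto. intros ll _ [_ [hh|hh]]; [lra|].
        replace (Z.min mu (z + step true)) with mu in hh by (simpl; lia). exact hh. }
      pose proof (IHn (z + 1)%Z mu ltac:(lia)).
      pose proof (prob_nonneg p hp' n (fun l => bad c z mu (false :: l))).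
      pose proof (prob_nonneg p hp' n (fun l => bad c z mu (true :: l))).
      unfold Fb in *. rewrite plus_IZR in *.
      destruct (Z.eq_dec z mu) as [<-|Hne].
      * destruct (Z.eq_dec z 1) as [->|Hz1].
        -- rewrite (prob_false p n (fun l => bad c 1 1 (false :: l))).
           2:{ intros ll [_ [hh|hh]]; [lra|]. destruct ll; simpl in hh; destruct hh; lia. }
           rewrite ln_1 in *. simpl IZR in *.
           assert (p * prob_n p n (fun l => bad c 1 1 (true :: l)) <= p * ((2 / 1 + 1 + 0) / c)).
           { apply Rmult_le_compat_l; lra. }
           replace ((2 / 1 + 1 + 0) / c) with (3 * / c) in * by (field; lra).
           replace ((1 / 1 + 1 + 0) / c) with (2 * / c) in * by (field; lra).
           assert (0 < / c) by (apply Rinv_0_lt_compat; lra). nra.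
        -- assert (HH2 : prob_n p n (fun l => bad c z z (false :: l)) <= prob_n p n (bad c (z - 1) (z - 1))).
           { apply prob_mono; auto. intros ll _ [_ [hh|hh]]; [lra|].
             replace (Z.min z (z + step false)) with (z - 1)%Z in hh by (simpl; lia). exact hh. }
           pose proof (IHn (z - 1)%Z (z - 1)%Z ltac:(lia)). unfold Fb in *. rewrite minus_IZR in *.
           assert (Hz2 : 2 <= IZR z) by (apply IZR_le; lia).
           pose proof (ineq3 p c (IZR z) hp hc Hz2).
           assert (p * prob_n p n (fun l => bad c z z (true :: l)) <= p * (((IZR z + 1) / IZR z + 1 + ln (IZR z)) / c)) by (apply Rmult_le_compat_l; lra).
           assert ((1-p) * prob_n p n (fun l => bad c z z (false :: l)) <= (1-p) * (((IZR z - 1) / (IZR z - 1) + 1 + ln (IZR z - 1)) / c)) by (apply Rmult_le_compat_l; lra).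
           lra.
      * assert (HH2 : prob_n p n (fun l => bad c z mu (false :: l)) <= prob_n p n (bad c (z - 1) mu)).
        { apply prob_mono; auto. intros ll _ [_ [hh|hh]]; [lra|].
          replace (Z.min mu (z + step false)) with mu in hh by (simpl; lia). exact hh. }
        pose proof (IHn (z - 1)%Z mu ltac:(lia)). unfold Fb in *. rewrite minus_IZR in *.
        assert (1 <= IZR mu) by (apply IZR_le; lia).
        pose proof (ineq1 p c (IZR mu) (IZR z) (1 + ln (IZR mu)) hp hc ltac:(lra)).
        assert (p * prob_n p n (fun l => bad c z mu (true :: l)) <= p * (((IZR z + 1) / IZR mu + 1 + ln (IZR mu)) / c)) by (apply Rmult_le_compat_l; lra).
        assert ((1-p) * prob_n p n (fun l => bad c z mu (false :: l)) <= (1-p) * (((IZR z - 1) / IZR mu + 1 + ln (IZR mu)) / c)) by (apply Rmult_le_compat_l; lra).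
        replace ((IZR z + 1) / IZR mu + 1 + ln (IZR mu)) with ((IZR z + 1) / IZR mu + (1 + ln (IZR mu))) in * by ring.
        replace ((IZR z - 1) / IZR mu + 1 + ln (IZR mu)) with ((IZR z - 1) / IZR mu + (1 + ln (IZR mu))) in * by ring.
        replace (IZR z / IZR mu + 1 + ln (IZR mu)) with (IZR z / IZR mu + (1 + ln (IZR mu))) in * by ring.
        lra.
Qed.

Lemma log_step N eps x y : 0 < ln (INR N) -> 0 < x -> 0 < y ->
  x <= exp (eps * ln (INR N)) * y -> logN N x - logN N y <= eps.
Proof.
  intros hL hx hy H. unfold logN.
  apply ln_le in H; auto. rewrite ln_mult in H by (try apply exp_pos; lra).
  rewrite ln_exp in H.
  replace (ln x / ln (INR N) - ln y / ln (INR N)) with ((ln x - ln y) * / ln (INR N)) by (field; lra).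
  assert (0 < / ln (INR N)) by (apply Rinv_0_lt_compat; lra).
  apply Rmult_le_reg_r with (ln (INR N)); auto.
  replace ((ln x - ln y) * / ln (INR N) * ln (INR N)) with (ln x - ln y) by (field; lra). nra.
Qed.

Lemma good_of N eps (w : nat -> Z) T : 0 < ln (INR N) -> 0 < eps ->
  is_tau0 w T ->
  (forall i m, (i <= m)%nat -> (m < T)%nat ->
      ~ (IZR (w m) > exp (eps * ln (INR N)) / 2 * IZR (w i))) ->
  good_event N eps w T.
Proof.
  intros hL heps [hT0 hT] nobad.
  assert (He : 0 < exp (eps * ln (INR N))) by apply exp_pos.
  unfold good_event; intros Smax [[m0 [Hm0 Hm0']] Hmax]. split.
  - intros s [Hs1 [Hs2 Hs3]] n Hn.
    assert (Hwn : (1 <= w n)%Z) by auto.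
    assert (HsT : (s <= T)%nat).
    { destruct (le_lt_dec s T); auto. specialize (Hs2 T l). lia. }
    assert (Hsm : (w n <= Smax)%Z) by (apply Hmax; lia).
    assert (HsT' : (s < T)%nat).
    { destruct (Nat.eq_dec s T); [subst; lia|lia]. }
    pose proof (nobad n s ltac:(lia) HsT') as nb. rewrite Hs1 in nb.
    apply Rnot_gt_le in nb.
    assert (HS1 : (0 < Smax)%Z) by lia.
    apply IZR_le in Hwn. apply IZR_lt in HS1. apply log_step; auto; try lra.
  - intros k Hk s1 s2 _ [Hs2a [Hs2b _]] n Hn.
    assert (Hwn : (1 <= w n)%Z) by (apply Hs2b; lia).
    destruct (Z.eq_dec k 1) as [->|Hk1].
    + unfold logN. simpl IZR. rewrite ln_1.
      assert (0 <= ln (IZR (w n))) by (rewrite <- ln_1; apply ln_le; [lra| apply IZR_le; lia]).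
      assert (0 <= ln (IZR (w n)) / ln (INR N)) by (apply Rdiv_le_0_compat; lra).
      replace (0 / ln (INR N)) with 0 by (field; lra). lra.
    + assert (HsT : (s2 <= T)%nat).
      { destruct (le_lt_dec s2 T); auto. specialize (Hs2b T l). lia. }
      assert (HsT' : (s2 < T)%nat).
      { destruct (Nat.eq_dec s2 T); [subst; lia|lia]. }
      pose proof (nobad n s2 ltac:(lia) HsT') as nb. rewrite Hs2a in nb.
      apply Rnot_gt_le in nb. rewrite minus_IZR in nb.
      assert (Hk2 : 2 <= IZR k) by (apply IZR_le; lia).
      apply IZR_le in Hwn. apply log_step; auto; try lra.
Qed.

Lemma classify N eps k0 n l (hk : (1 <= k0)%nat) (hL : 0 < ln (INR N)) (heps : 0 < eps) :
  length l = n ->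
  (exists T, (T <= n)%nat /\ is_tau0 (walk k0 l) T /\ good_event N eps (walk k0 l) T)
  \/ alive (Z.of_nat k0) l \/ bad (exp (eps * ln (INR N)) / 2) (Z.of_nat k0) (Z.of_nat k0) l.
Proof.
  intros Hlen. rewrite walk_wZ.
  set (c := exp (eps * ln (INR N)) / 2).
  assert (hc : 0 < c) by (unfold c; pose proof (exp_pos (eps * ln (INR N))); lra).
  destruct (classic (alive (Z.of_nat k0) l)) as [Ha|Ha]; [right; left; auto|].
  destruct (classic (bad c (Z.of_nat k0) (Z.of_nat k0) l)) as [Hb|Hb]; [right; right; auto|].
  left.
  apply not_alive in Ha. rewrite Hlen in Ha.
  destruct (first_zero (wZ (Z.of_nat k0) l) (wZ_diff l _) ltac:(rewrite wZ_0; lia) n Ha)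
    as [T [HT [HT0 HTj]]].
  exists T; split; auto.
  assert (Htau : is_tau0 (wZ (Z.of_nat k0) l) T).
  { split; auto. intros j Hj; specialize (HTj j Hj); lia. }
  split; auto.
  apply good_of; auto.
  intros i m Him HmT Hgt. apply Hb. apply bad_link; auto; [lia|].
  exists i, m. split; [lia|]. split.
  - intros j Hj; apply HTj; lia.
  - right; exact Hgt.
Qed.

Lemma inner a phi N eps (ha : 0 < a) (hphi : forall N : nat, 0 < phi N <= 1) (heps : 0 < eps)
  (hk : (1 <= kN N)%nat) (hL : 0 < ln (INR N)) :
  1 - Fb (exp (eps * ln (INR N)) / 2) (Z.of_nat (kN N)) (Z.of_nat (kN N))
    <= prob_stopped (p0N a phi N) (kN N) (good_event N eps) <= 1.
Proof.
  set (p := p0N a phi N).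
  assert (hp : 0 < p < 1/2).
  { unfold p, p0N. specialize (hphi N). assert (0 < a * phi N) by nra.
    split; [apply Rdiv_lt_0_compat; lra|].
    apply Rmult_lt_reg_r with (2 + a * phi N); [lra|]. field_simplify; lra. }
  assert (hp' : 0 <= p <= 1) by lra.
  set (c := exp (eps * ln (INR N)) / 2).
  assert (hc : 0 < c) by (unfold c; pose proof (exp_pos (eps * ln (INR N))); lra).
  set (B := Fb c (Z.of_nat (kN N)) (Z.of_nat (kN N))).
  set (s := 1 / (2 * p)). set (rho := 1/2 + 2 * p * (1 - p)).
  assert (hs : 1 <= s).
  { unfold s. apply Rmult_le_reg_r with (2 * p); [lra|]. field_simplify; lra. }
  assert (hr : 0 <= rho < 1) by (unfold rho; nra).
  assert (he : p * s * s + (1 - p) = rho * s) by (unfold s, rho; field; lra).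
  set (C := s ^ Z.to_nat (Z.of_nat (kN N))).
  set (f := fun n => prob_n p n (fun l => exists T, (T <= n)%nat /\
        is_tau0 (walk (kN N) l) T /\ good_event N eps (walk (kN N) l) T)).
  assert (Hf : forall n, 1 - rho ^ n * C - B <= f n <= 1).
  { intros n. split; [|apply prob_le1; auto].
    pose proof (prob_cover p hp' n (fun l => exists T, (T <= n)%nat /\
        is_tau0 (walk (kN N) l) T /\ good_event N eps (walk (kN N) l) T) (alive (Z.of_nat (kN N))) (bad c (Z.of_nat (kN N)) (Z.of_nat (kN N)))
      (fun _ => False)
      ltac:(intros l Hl; destruct (classify N eps (kN N) n l hk hL heps Hl) as [h|[h|h]]; unfold c; tauto)) as Hc.
    rewrite (prob_false p n (fun _ => False)) in Hc by auto.
    pose proof (prob_alive p s rho hp' hs (proj1 hr) he n (Z.of_nat (kN N))).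
    pose proof (prob_bad p c ltac:(lra) hc n (Z.of_nat (kN N)) (Z.of_nat (kN N)) ltac:(lia)).
    unfold f, C, B. fold c. lra. }
  assert (Hg : is_lim_seq (fun n => 1 - rho ^ n * C - B) (1 - 0 * C - B)).
  { apply is_lim_seq_minus'; [|apply is_lim_seq_const].
    apply is_lim_seq_minus'; [apply is_lim_seq_const|].
    apply (is_lim_seq_scal_r (fun n => rho ^ n) C 0).
    apply is_lim_seq_geom. rewrite Rabs_pos_eq; lra. }
  apply is_lim_seq_unique in Hg.
  assert (H1 : Rbar_le (Lim_seq (fun n => 1 - rho ^ n * C - B)) (Lim_seq f))
    by (apply Lim_seq_le_loc; exists 0%nat; intros; apply Hf).
  assert (H2 : Rbar_le (Lim_seq f) (Lim_seq (fun _ => 1)))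
    by (apply Lim_seq_le_loc; exists 0%nat; intros; apply Hf).
  rewrite Hg in H1. rewrite Lim_seq_const in H2.
  unfold prob_stopped. fold p. change (Lim_seq _) with (Lim_seq f).
  destruct (Lim_seq f); simpl in *; try contradiction. lra.
Qed.

Lemma kN_facts N : (3 <= N)%nat ->
  1 <= ln (INR N) /\ (1 <= kN N)%nat /\ IZR (Z.of_nat (kN N)) <= INR N.
Proof.
  intros HN. assert (HN' : 3 <= INR N) by (replace 3 with (INR 3) by (simpl; lra); apply le_INR; lia).
  assert (HL : 1 <= ln (INR N)).
  { rewrite <- (ln_exp 1). apply ln_le; [apply exp_pos|]. pose proof exp_le_3; lra. }
  set (L := ln (INR N)) in *.
  assert (HLN : L < INR N).
  { pose proof (exp_ineq1_le L). unfold L in *. rewrite exp_ln in H by lra. lra. }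
  assert (Hs1 : 1 <= sqrt L) by (rewrite <- sqrt_1; apply sqrt_le_1_alt; lra).
  assert (HsL : sqrt L <= L).
  { pose proof (sqrt_sqrt L ltac:(lra)). nra. }
  set (x := INR N / sqrt L).
  assert (Hx1 : 1 < x).
  { unfold x. apply Rmult_lt_reg_r with (sqrt L); [lra|]. field_simplify; lra. }
  assert (HxN : x <= INR N).
  { unfold x. apply Rmult_le_reg_r with (sqrt L); [lra|]. field_simplify; nra. }
  pose proof (base_Int_part x) as [B1 B2].
  assert (Hpos : (0 < Int_part x)%Z) by (apply lt_IZR; lra).
  unfold kN. fold L. fold x.
  split; auto. split; [lia|].
  rewrite Z2Nat.id by lia. lra.
Qed.

Lemma exp_sq x : 0 < x -> x * x / 4 <= exp x.
Proof.
  intros hx. replace x with (x/2 + x/2) at 3 by field. rewrite exp_plus.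
  pose proof (exp_ineq1_le (x/2)). nra.
Qed.

Lemma B_bound N eps : (3 <= N)%nat -> 0 < eps ->
  Fb (exp (eps * ln (INR N)) / 2) (Z.of_nat (kN N)) (Z.of_nat (kN N)) <= 24 / (eps * eps * ln (INR N)).
Proof.
  intros HN heps. destruct (kN_facts N HN) as [HL [Hk HkN]].
  set (L := ln (INR N)) in *.
  assert (Hk1 : 1 <= IZR (Z.of_nat (kN N))) by (apply IZR_le; lia).
  unfold Fb.
  assert (Hln : ln (IZR (Z.of_nat (kN N))) <= L) by (apply ln_le; lra).
  assert (Hln0 : 0 <= ln (IZR (Z.of_nat (kN N)))) by (rewrite <- ln_1; apply ln_le; lra).
  set (E := exp (eps * L)).
  assert (HE : eps * L * (eps * L) / 4 <= E) by (apply exp_sq; assert (0 < eps * L) by nra; nra).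
  replace (IZR (Z.of_nat (kN N)) / IZR (Z.of_nat (kN N))) with 1 by (field; lra).
  set (K := ln (IZR (Z.of_nat (kN N)))) in *.
  assert (He0 : 0 < eps * L * (eps * L) / 4) by (assert (0 < eps * L) by nra; apply Rdiv_lt_0_compat; nra).
  replace ((1 + 1 + K) / (E / 2)) with (2 * (2 + K) / E) by (field; lra).
  apply Rle_trans with (2 * (2 + K) / (eps * L * (eps * L) / 4)).
  - apply Rmult_le_compat_l; [lra|]. apply Rinv_le_contravar; lra.
  - apply Rmult_le_reg_r with (eps * L * (eps * L) / 4); auto.
    replace (2 * (2 + K) / (eps * L * (eps * L) / 4) * (eps * L * (eps * L) / 4)) with (2 * (2 + K)) by (field; nra).
    replace (24 / (eps * eps * L) * (eps * L * (eps * L) / 4)) with (6 * L) by (field; nra).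
    lra.
Qed.

Theorem lemma4p6 (a : R) (phi : nat -> R)
  (ha : 0 < a) (hphi : forall N : nat, 0 < phi N <= 1) :
  forall eps : R, 0 < eps ->
    is_lim_seq
      (fun N : nat => prob_stopped (p0N a phi N) (kN N) (good_event N eps))
      1.
Proof.
  intros eps heps. apply is_lim_seq_spec. intros d.
  pose proof (cond_pos d) as hd.
  set (T0 := 24 / (eps * eps * d)).
  assert (hT0 : 0 < T0) by (unfold T0; apply Rdiv_lt_0_compat; [lra| apply Rmult_lt_0_compat; [nra|lra]]).
  pose proof (archimed (exp T0)) as [A1 _].
  assert (hup : (0 < up (exp T0))%Z) by (apply lt_IZR; pose proof (exp_pos T0); lra).
  exists (Nat.max 3 (Z.to_nat (up (exp T0)))). intros N HN.
  assert (HN3 : (3 <= N)%nat) by lia.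
  destruct (kN_facts N HN3) as [HL [Hk _]].
  assert (HNe : exp T0 < INR N).
  { apply Rlt_le_trans with (INR (Z.to_nat (up (exp T0)))).
    - rewrite INR_IZR_INZ, Z2Nat.id by lia. lra.
    - apply le_INR; lia. }
  assert (HLT : T0 < ln (INR N)).
  { rewrite <- (ln_exp T0). apply ln_increasing; [apply exp_pos|auto]. }
  pose proof (inner a phi N eps ha hphi heps Hk ltac:(lra)) as [I1 I2].
  pose proof (B_bound N eps HN3 heps) as HB.
  assert (Hee : 0 < eps * eps) by nra.
  assert (Hel : 0 < eps * eps * ln (INR N)) by (apply Rmult_lt_0_compat; lra).
  assert (Hed : 0 < eps * eps * d) by (apply Rmult_lt_0_compat; lra).
  assert (H24 : 24 / (eps * eps * ln (INR N)) < d).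
  { apply Rmult_lt_reg_r with (eps * eps * ln (INR N)); [lra|].
    replace (24 / (eps * eps * ln (INR N)) * (eps * eps * ln (INR N))) with 24 by (field; lra).
    unfold T0 in HLT. apply Rmult_lt_compat_l with (r := eps * eps * d) in HLT; [|lra].
    replace (eps * eps * d * (24 / (eps * eps * d))) with 24 in HLT by (field; lra).
    replace (d * (eps * eps * ln (INR N))) with (eps * eps * d * ln (INR N)) by ring. lra. }
  rewrite Rabs_left1; lra.
Qed.
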